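(* Let $n\ge1$. Let $(\mu_b)_{0\ne b\in\mathbb N^p,\ \mathrm{ht}(\underline b)<n}$ be a family of elements of $k$ and $(u^b)_{0\ne b\in\mathbb N^p,\ \mathrm{ht}(\underline b)<n}$ a family of elements of $k[\Gamma]$ such that for all such $b$ $$u^b=\mu_b(1-h^b)+\sum_{d,e\ne0,\ \underline d+\underline e=\underline b}t^b_{d,e}\mu_du^e,\qquad \Delta(u^b)=h^b\otimes u^b+u^b\otimes1+\sum_{d,e\ne0,\ \underline d+\underline e=\underline b}t^b_{d,e}u^dh^e\otimes u^e.$$ Let $a\in\mathbb N^p$ with $\mathrm{ht}(\underline a)=n$ and $u^a\in k[\Gamma]$. Then the following are equivalent: (i) $u^a=\mu_a(1-h^a)+\sum_{b,c\ne0,\ \underline b+\underline c=\underline a}t^a_{b,c}\mu_bu^c$ for some $\mu_a\in k$; (ii) $\Delta(u^a)=h^a\otimes u^a+u^a\otimes1+\sum_{b,c\ne0,\ \underline b+\underline c=\underline a}t^a_{b,c}u^bh^c\otimes u^c$.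
   Context: $k$ algebraically closed of characteristic $0$. $\mathcal D=\mathcal D(\Gamma,(g_i),(\chi_i),(a_{ij}))$ is a connected datum of finite Cartan type (i.e. $g_i\in\Gamma$, $\chi_i$ characters of the finite abelian group $\Gamma$, $(a_{ij})$ a connected Cartan matrix of finite type, $q_{ij}=\chi_j(g_i)$, $q_{ij}q_{ji}=q_{ii}^{a_{ij}}$, $q_{ii}\ne1$) such that each $q_{ii}$ has odd order, prime to 3 in type $G_2$; $N$ is the common order of the $q_{ii}$. $\Phi^+=\{\beta_1,\dots,\beta_p\}$ is the set of positive roots in the convex order given by a fixed reduced expression of the longest Weyl group element; for $\alpha=\sum n_i\alpha_i$, $g_\alpha=\prod g_i^{n_i}$, $\chi_\alpha=\prod\chi_i^{n_i}$, $\mathrm{ht}(\alpha)=\sum n_i$. $R(\mathcal D)$ is the tensor algebra $k\langle x_1,\dots,x_\theta\rangle$ (braided Hopf algebra in Yetter–Drinfeld modules over $\Gamma$, $x_i$ primitive of $\Gamma$-degree $g_i$ and weight $\chi_i$, braiding $c(x\otimes y)=\chi_\beta(g_\alpha)y\otimes x$ for $x,y$ of $\mathbb Z^\theta$-degrees $\alpha,\beta$) modulo the quantum Serre relations $\mathrm{ad}_c(x_i)^{1-a_{ij}}(x_j)$, $i\ne j$; $x_{\beta_l}$ are the root vectors (the iterated braided commutators corresponding to Lusztig's PBW root vectors). Put $z_l=x_{\beta_l}^N$, $h_l=g_{\beta_l}^N$, and for $a\in\mathbb N^p$: $z^a=z_1^{a_1}\cdots z_p^{a_p}$, $h^a=h_1^{a_1}\cdots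 h_p^{a_p}$, $\underline a=\sum a_l\beta_l\in\mathbb Z^\theta$. The subalgebra $K(\mathcal D)$ generated by the $z_l$ is a braided Hopf subalgebra with basis $(z^a)_{a\in\mathbb N^p}$, and $t^a_{b,c}\in k$ ($0\ne b,c$) are the unique scalars with $\Delta_{K(\mathcal D)}(z^a)=z^a\otimes1+1\otimes z^a+\sum_{b,c\ne0,\underline b+\underline c=\underline a}t^a_{b,c}z^b\otimes z^c$. $\Delta$ in the claim is the comultiplication of the group algebra $k[\Gamma]$. *)

(* Defs.v *)
From HB Require Import structures.
From mathcomp Require Import all_boot all_order all_algebra all_fingroup.
Set Implicit Arguments. Unset Strict Implicit. Unset Printing Implicit Defensive.
Import GRing.Theory.
Local Open Scope ring_scope.

(* ---------- The group algebra k[Gamma] and k[Gamma] (x) k[Gamma] ----------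
   An element of k[Gamma] is its coefficient function Gamma -> k
   (u = \sum_x u(x) x).  k[Gamma] (x) k[Gamma] = k[Gamma x Gamma] is represented
   by coefficient functions on pairs: w = \sum_(x,y) w(x,y) x (x) y. *)
Notation galg k gT := {ffun gT -> GRing.Nmodule.sort k} (only parsing).
Notation galg2 k gT := {ffun (gT * gT)%type -> GRing.Nmodule.sort k} (only parsing).

Definition gelem (k : nzRingType) (gT : finGroupType) (g : gT) : galg k gT :=
  [ffun x => (x == g)%:R].
Definition gmul (k : nzRingType) (gT : finGroupType) (u v : galg k gT) : galg k gT :=
  [ffun x => \sum_(y : gT) u y * v (y^-1 * x)%g].
Definition gtens (k : nzRingType) (gT : finGroupType) (u v : galg k gT) : galg2 k gT :=
  [ffun xy => u xy.1 * v xy.2].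
(* comultiplication of k[Gamma]: Delta(g) = g (x) g *)
Definition gDelta (k : nzRingType) (gT : finGroupType) (u : galg k gT) : galg2 k gT :=
  [ffun xy => if xy.1 == xy.2 then u xy.1 else 0].

Definition nvec (p : nat) := {ffun 'I_p -> nat}.
Definition nzv (p : nat) (a : nvec p) : bool := [exists l, a l != 0%N].
Definition ht (theta : nat) (al : {ffun 'I_theta -> nat}) : nat := (\sum_(i < theta) al i)%N.
Definition under (theta p : nat) (beta : 'I_p -> {ffun 'I_theta -> nat}) (a : nvec p)
  : {ffun 'I_theta -> nat} := [ffun i => (\sum_(l < p) a l * beta l i)%N].
Definition sumeq (theta : nat) (x y z : {ffun 'I_theta -> nat}) : bool :=
  [forall i, (x i + y i == z i)%N].

Definition groot (gT : finGroupType) (theta : nat) (g : 'I_theta -> gT)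
  (al : {ffun 'I_theta -> nat}) : gT := (\prod_(i < theta) g i ^+ al i)%g.
Definition hpow (gT : finGroupType) (theta p : nat) (g : 'I_theta -> gT)
  (beta : 'I_p -> {ffun 'I_theta -> nat}) (N : nat) (a : nvec p) : gT :=
  (\prod_(l < p) (groot g (beta l) ^+ N) ^+ a l)%g.

Definition natv (p m : nat) (b : {ffun 'I_p -> 'I_m}) : nvec p := [ffun l => val (b l)].

(* Since every positive root has
   height >= 1, such b, c have all entries <= ht(underline a), so the finite
   enumeration of vectors with entries in 'I_(ht(underline a)).+1 is exhaustive. *)
Definition dsum (V : nmodType) (theta p : nat) (beta : 'I_p -> {ffun 'I_theta -> nat})
  (a : nvec p) (F : nvec p -> nvec p -> V) : V :=
  \sum_(b : {ffun 'I_p -> 'I_(ht (under beta a)).+1})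
   \sum_(c : {ffun 'I_p -> 'I_(ht (under beta a)).+1}
        | [&& nzv (natv b), nzv (natv c) &
              sumeq (under beta (natv b)) (under beta (natv c)) (under beta a)])
     F (natv b) (natv c).

(* Sum over all b in N^p with underline b = x (with entries bounded by ht x,
   again exhaustive since positive roots have height >= 1). *)
Definition rsum (V : nmodType) (theta p : nat) (beta : 'I_p -> {ffun 'I_theta -> nat})
  (x : {ffun 'I_theta -> nat}) (F : nvec p -> V) : V :=
  \sum_(b : {ffun 'I_p -> 'I_(ht x).+1} | under beta (natv b) == x) F (natv b).

(* Coassociativity of Delta_K(z^a) = z^a(x)1 + 1(x)z^a + sum t^a_{b,c} z^b (x) z^c,
   read on the coefficient of z^x (x) z^y (x) z^w, x,y,w <> 0 (the coefficients
   of the other basis tensors are automatically equal). *)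
Definition t_coassoc (k : nzRingType) (theta p : nat)
  (beta : 'I_p -> {ffun 'I_theta -> nat}) (t : nvec p -> nvec p -> nvec p -> k) : Prop :=
  forall a x y w : nvec p, nzv x -> nzv y -> nzv w ->
    (forall i, (under beta x i + under beta y i + under beta w i)%N = under beta a i) ->
    rsum beta [ffun i => (under beta x i + under beta y i)%N]
         (fun b => t a b w * t b x y)
    = rsum beta [ffun i => (under beta y i + under beta w i)%N]
         (fun c => t a x c * t c y w).

Definition gscal (k : nzRingType) (gT : finGroupType) (c : k) (u : galg k gT) : galg k gT :=
  [ffun x => c * u x].
Definition gscal2 (k : nzRingType) (gT : finGroupType) (c : k) (w : galg2 k gT) : galg2 k gT :=
  [ffun x => c * w x].

(* Main.v *)
Require Import Defs.
From HB Require Import structures.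
From mathcomp Require Import all_boot all_order all_algebra all_fingroup.
From mathcomp Require Import ring.
Import GRing.Theory.
Local Open Scope ring_scope.
Set Implicit Arguments. Unset Strict Implicit.

Lemma comm_of_ab (gT : finGroupType) : abelian [set: gT] -> forall x y : gT, commute x y.
Proof. rewrite abelianE => /centsP C x y; exact: (C x (in_setT x) y (in_setT y)). Qed.

Lemma prodg_split (gT : finGroupType) (I : Type) (r : seq I) (F G : I -> gT) :
  (forall x y : gT, commute x y) ->
  (\prod_(i <- r) (F i * G i) = (\prod_(i <- r) F i) * \prod_(i <- r) G i)%g.
Proof.
move=> C; elim: r => [|i r IH]; first by rewrite !big_nil mulg1.
rewrite !big_cons IH !mulgA; congr (_ * _)%g.
by rewrite -!mulgA (C (G i)).
Qed.

Lemma prodg_exp (gT : finGroupType) (I : Type) (r : seq I) (F : I -> gT) m :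
  (forall x y : gT, commute x y) ->
  ((\prod_(i <- r) F i) ^+ m = \prod_(i <- r) (F i ^+ m))%g.
Proof.
move=> C; elim: r => [|i r IH]; first by rewrite !big_nil expg1n.
by rewrite !big_cons expgMn ?IH.
Qed.

Lemma exp_sum (gT : finGroupType) (I : Type) (r : seq I) (f : I -> nat) (x : gT) :
  (x ^+ (\sum_(i <- r) f i) = \prod_(i <- r) x ^+ f i)%g.
Proof. by apply: (big_morph (fun n => x ^+ n)%g) => [m n|]; rewrite ?expgnDr. Qed.

Lemma prodg_exch (gT : finGroupType) (I J : Type) (r : seq I) (s : seq J) (F : I -> J -> gT) :
  (forall x y : gT, commute x y) ->
  (\prod_(i <- r) \prod_(j <- s) F i j = \prod_(j <- s) \prod_(i <- r) F i j)%g.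
Proof.
move=> C; elim: r => [|i r IH].
  by rewrite big_nil; apply/esym/big1 => j _; rewrite big_nil.
by rewrite big_cons IH -prodg_split //; apply: eq_bigr => j _; rewrite big_cons.
Qed.

Lemma hpowE (gT : finGroupType) (theta p : nat) (g : 'I_theta -> gT)
  (beta : 'I_p -> {ffun 'I_theta -> nat}) (N : nat) (v : nvec p) :
  (forall x y : gT, commute x y) ->
  hpow g beta N v = (\prod_(i < theta) g i ^+ (N * under beta v i)%N)%g.
Proof.
move=> C; rewrite /hpow.
transitivity (\prod_(l < p) \prod_(i < theta) g i ^+ (beta l i * (N * v l))%N)%g.
  apply: eq_bigr => l _; rewrite -expgnA /groot prodg_exp //.
  by apply: eq_bigr => i _; rewrite -expgnA.
rewrite prodg_exch //; apply: eq_bigr => i _.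
rewrite -exp_sum; congr (_ ^+ _)%g.
rewrite ffunE big_distrr /=; apply: eq_bigr => l _.
by rewrite mulnCA (mulnC (v l)).
Qed.

Lemma hpow_mul (gT : finGroupType) (theta p : nat) (g : 'I_theta -> gT)
  (beta : 'I_p -> {ffun 'I_theta -> nat}) (N : nat) (a b c : nvec p) :
  (forall x y : gT, commute x y) ->
  sumeq (under beta b) (under beta c) (under beta a) ->
  (hpow g beta N b * hpow g beta N c)%g = hpow g beta N a.
Proof.
move=> C /forallP S; rewrite !hpowE // -prodg_split //.
by apply: eq_bigr => i _; rewrite -expgnDr -mulnDr (eqP (S i)).
Qed.

Lemma ht_under (theta p : nat) (beta : 'I_p -> {ffun 'I_theta -> nat}) (x : nvec p) :
  ht (under beta x) = (\sum_(l < p) x l * ht (beta l))%N.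
Proof.
rewrite /ht; under eq_bigr do rewrite ffunE.
rewrite exchange_big; apply: eq_bigr => l _; by rewrite big_distrr.
Qed.

Lemma bound_ht (theta p : nat) (beta : 'I_p -> {ffun 'I_theta -> nat}) (x : nvec p) l :
  (forall l, 0 < ht (beta l))%N -> (x l <= ht (under beta x))%N.
Proof.
move=> hb; rewrite ht_under (bigD1 l) //=.
apply: leq_trans (leq_addr _ _); by rewrite leq_pmulr.
Qed.

Lemma nz_ht (theta p : nat) (beta : 'I_p -> {ffun 'I_theta -> nat}) (x : nvec p) :
  (forall l, 0 < ht (beta l))%N -> nzv x = (0 < ht (under beta x))%N.
Proof.
move=> hb; rewrite ht_under lt0n sum_nat_eq0 /nzv.
apply/existsP/negP => [[l hl] /forallP /(_ l) /=| H].
  by rewrite muln_eq0 (negbTE hl) /= -(negbK (_ == _)) -lt0n hb.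
apply/existsP; apply: contra_notT H => /existsPn H; apply/forallP => l /=.
by move: (H l); rewrite negbK => /eqP ->.
Qed.

Lemma ht_sumeq (theta : nat) (x y z : {ffun 'I_theta -> nat}) :
  sumeq x y z -> ht z = (ht x + ht y)%N.
Proof.
move/forallP=> S; rewrite /ht -big_split; apply: eq_bigr => i _; by move: (S i) => /eqP.
Qed.

Lemma widen_sum (R : nmodType) (p m B : nat) (F : nvec p -> R) :
  (m <= B)%N -> (forall v : nvec p, ~~ [forall l, (v l <= m)%N] -> F v = 0) ->
  \sum_(b : {ffun 'I_p -> 'I_m.+1}) F (natv b) = \sum_(b : {ffun 'I_p -> 'I_B.+1}) F (natv b).
Proof.
move=> mB F0.
have hv : forall j : {ffun 'I_p -> 'I_m.+1},
    natv ([ffun l => inord (j l)] : {ffun 'I_p -> 'I_B.+1}) = natv j.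
  move=> j; apply/ffunP => l; rewrite !ffunE /= inordK //.
  by apply: leq_trans (ltn_ord _) _; rewrite ltnS.
rewrite [RHS](bigID (fun b : {ffun 'I_p -> 'I_B.+1} => [forall l, natv b l <= m]%N)) /=.
rewrite [X in _ = _ + X]big1 ?addr0; last by move=> b /F0.
rewrite (reindex_onto (fun j : {ffun 'I_p -> 'I_m.+1} => [ffun l => inord (j l)] : {ffun 'I_p -> 'I_B.+1})
   (fun i : {ffun 'I_p -> 'I_B.+1} => [ffun l => inord (i l)] : {ffun 'I_p -> 'I_m.+1})) /=.
- apply: eq_big => j; last by move=> _; rewrite hv.
  rewrite hv; apply/esym/andP; split.
    by apply/forallP => l; rewrite ffunE -ltnS ltn_ord.
  apply/eqP/ffunP => l; rewrite !ffunE; apply/val_inj => /=.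
  have hl : (j l < B.+1)%N by apply: leq_trans (ltn_ord _) _; rewrite ltnS.
  by rewrite (inordK hl) inordK.
- move=> i /forallP H; apply/ffunP => l; rewrite !ffunE; apply/val_inj => /=.
  have := H l; rewrite ffunE => Hl.
  have Hl2 : (i l < m.+1)%N by rewrite ltnS.
  by rewrite (inordK Hl2) inordK.
Qed.

Definition Cd (theta p : nat) (beta : 'I_p -> {ffun 'I_theta -> nat}) (b d e : nvec p) : bool :=
  [&& nzv d, nzv e & sumeq (under beta d) (under beta e) (under beta b)].

Lemma Cd_bound (theta p : nat) (beta : 'I_p -> {ffun 'I_theta -> nat}) (b d e : nvec p) l :
  (forall l, 0 < ht (beta l))%N -> Cd beta b d e ->
  (d l <= ht (under beta b))%N /\ (e l <= ht (under beta b))%N.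
Proof.
move=> hb /and3P [_ _ /ht_sumeq ->]; split.
  by apply: leq_trans (bound_ht _ _ hb) (leq_addr _ _).
by apply: leq_trans (bound_ht _ _ hb) (leq_addl _ _).
Qed.

Lemma dsumV (R : nmodType) (theta p : nat) (beta : 'I_p -> {ffun 'I_theta -> nat})
  (b : nvec p) (F : nvec p -> nvec p -> R) (B : nat) :
  (forall l, 0 < ht (beta l))%N -> (ht (under beta b) <= B)%N ->
  dsum beta b F = \sum_(d : {ffun 'I_p -> 'I_B.+1}) \sum_(e : {ffun 'I_p -> 'I_B.+1})
    (if Cd beta b (natv d) (natv e) then F (natv d) (natv e) else 0).
Proof.
move=> hb hB; rewrite /dsum.
transitivity (\sum_(d : {ffun 'I_p -> 'I_(ht (under beta b)).+1})
   \sum_(e : {ffun 'I_p -> 'I_B.+1})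
    (if Cd beta b (natv d) (natv e) then F (natv d) (natv e) else 0)).
  apply: eq_bigr => d _; rewrite big_mkcond /=.
  apply: (@widen_sum R p _ B (fun v => if Cd beta b (natv d) v then F (natv d) v else 0)) => //.
  move=> v /forallPn [l Hl]; case: ifP => // /(Cd_bound l hb) [_ H].
  by rewrite H in Hl.
apply: (@widen_sum R p _ B (fun v => \sum_(e : {ffun 'I_p -> 'I_B.+1})
    (if Cd beta b v (natv e) then F v (natv e) else 0))) => //.
move=> v /forallPn [l Hl]; apply: big1 => e _; case: ifP => // /(Cd_bound l hb) [H _].
by rewrite H in Hl.
Qed.

Lemma rsumV (R : nmodType) (theta p : nat) (beta : 'I_p -> {ffun 'I_theta -> nat})
  (x : {ffun 'I_theta -> nat}) (F : nvec p -> R) (B : nat) :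
  (forall l, 0 < ht (beta l))%N -> (ht x <= B)%N ->
  rsum beta x F = \sum_(b : {ffun 'I_p -> 'I_B.+1})
    (if under beta (natv b) == x then F (natv b) else 0).
Proof.
move=> hb hB; rewrite /rsum big_mkcond /=.
apply: (@widen_sum R p _ B (fun v => if under beta v == x then F v else 0)) => //.
move=> v /forallPn [l Hl]; case: ifP => // /eqP E.
by rewrite -E bound_ht in Hl.
Qed.

Definition Qc (theta p : nat) (beta : 'I_p -> {ffun 'I_theta -> nat}) (a x y w : nvec p) : bool :=
  [&& nzv x, nzv y, nzv w &
      [forall i, under beta x i + under beta y i + under beta w i == under beta a i]%N].

Lemma condL (theta p : nat) (beta : 'I_p -> {ffun 'I_theta -> nat}) (a b c d e : nvec p) :
  (forall l, 0 < ht (beta l))%N ->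
  Cd beta a b c && Cd beta c d e
  = Qc beta a b d e && sumeq (under beta d) (under beta e) (under beta c).
Proof.
move=> hb; apply/idP/idP.
  case/andP=> /and3P [nb nc /forallP S1] /and3P [nd ne S2].
  rewrite /Qc nb nd ne S2 andbT /=; apply/forallP => i.
  by move/forallP: S2 => /(_ i) /eqP; rewrite -addnA => ->; apply: S1.
case/andP=> /and4P [nb nd ne /forallP S] S2.
have nc : nzv c by rewrite (nz_ht c hb) (ht_sumeq S2) addn_gt0 -(nz_ht d hb) nd.
rewrite /Cd nb nc nd ne S2 /= andbT; apply/forallP => i.
by move/forallP: S2 => /(_ i) /eqP <-; rewrite addnA.
Qed.

Lemma condR (theta p : nat) (beta : 'I_p -> {ffun 'I_theta -> nat}) (a b c d e : nvec p) :
  (forall l, 0 < ht (beta l))%N ->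
  Cd beta a b c && Cd beta b d e
  = Qc beta a d e c && sumeq (under beta d) (under beta e) (under beta b).
Proof.
move=> hb; apply/idP/idP.
  case/andP=> /and3P [nb nc /forallP S1] /and3P [nd ne S2].
  rewrite /Qc nc nd ne S2 andbT /=; apply/forallP => i.
  by move/forallP: S2 => /(_ i) /eqP ->.
case/andP=> /and4P [nd ne nc /forallP S] S2.
have nb : nzv b by rewrite (nz_ht b hb) (ht_sumeq S2) addn_gt0 -(nz_ht d hb) nd.
rewrite /Cd nb nc nd ne S2 /= andbT; apply/forallP => i.
by move/forallP: S2 => /(_ i) /eqP <-.
Qed.

Lemma sumeqE (theta : nat) (x y z : {ffun 'I_theta -> nat}) :
  sumeq x y z = (z == [ffun i => (x i + y i)%N]).
Proof.
apply/forallP/eqP => [H|-> i]; last by rewrite ffunE.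
by apply/ffunP => i; rewrite ffunE; apply/esym/eqP/H.
Qed.

Lemma ht_sum3 (theta : nat) (x y w z : {ffun 'I_theta -> nat}) :
  (forall i, x i + y i + w i = z i)%N -> ht z = (ht x + ht y + ht w)%N.
Proof. by move=> H; rewrite /ht -!big_split; apply: eq_bigr => i _; rewrite /= -H. Qed.

Lemma ht_ffadd (theta : nat) (x y : {ffun 'I_theta -> nat}) :
  ht [ffun i => (x i + y i)%N] = (ht x + ht y)%N.
Proof. by rewrite /ht -big_split; apply: eq_bigr => i _; rewrite ffunE. Qed.

Lemma comb (R : comNzRingType) (theta p : nat) (beta : 'I_p -> {ffun 'I_theta -> nat})
  (t G : nvec p -> nvec p -> nvec p -> R) (a : nvec p) :
  (forall l, 0 < ht (beta l))%N -> t_coassoc beta t ->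
  dsum beta a (fun b c => dsum beta c (fun d e => t a b c * t c d e * G b d e))
  = dsum beta a (fun b c => dsum beta b (fun d e => t a b c * t b d e * G d e c)).
Proof.
move=> hb tc.
set B := ht (under beta a).
pose S (X Y W : nvec p) := \sum_(c : {ffun 'I_p -> 'I_B.+1})
  (if sumeq (under beta Y) (under beta W) (under beta (natv c))
   then t a X (natv c) * t (natv c) Y W else 0).
pose S' (X Y W : nvec p) := \sum_(b : {ffun 'I_p -> 'I_B.+1})
  (if sumeq (under beta X) (under beta Y) (under beta (natv b))
   then t a (natv b) W * t (natv b) X Y else 0).
have key : forall X Y W, Qc beta a X Y W -> S X Y W = S' X Y W.
  move=> X Y W /and4P [nx ny nw /forallP H].
  have H' : forall i, (under beta X i + under beta Y i + under beta W i)%N = under beta a i.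
    by move=> i; apply/eqP/H.
  have hB := ht_sum3 H'.
  have := tc a X Y W nx ny nw H'.
  rewrite [LHS](rsumV _ (B:=B) hb); last by rewrite ht_ffadd /B hB leq_addr.
  rewrite [RHS](rsumV _ (B:=B) hb); last by rewrite ht_ffadd /B hB -addnA leq_addl.
  move=> E; rewrite /S /S'.
  under eq_bigr do rewrite sumeqE.
  rewrite -E; apply: eq_bigr => b _; by rewrite sumeqE.
have hB0 : (ht (under beta a) <= B)%N by [].
have hcd : forall b c : nvec p, Cd beta a b c ->
    (ht (under beta b) <= B)%N /\ (ht (under beta c) <= B)%N.
  move=> b c /and3P [_ _ /ht_sumeq E]; rewrite /B E; split; [exact: leq_addr | exact: leq_addl].
rewrite !(dsumV _ hb hB0).
transitivity (\sum_(X : {ffun 'I_p -> 'I_B.+1}) \sum_(Y : {ffun 'I_p -> 'I_B.+1})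
  \sum_(W : {ffun 'I_p -> 'I_B.+1})
  (if Qc beta a (natv X) (natv Y) (natv W) then S (natv X) (natv Y) (natv W) * G (natv X) (natv Y) (natv W) else 0)).
  transitivity (\sum_(b : {ffun 'I_p -> 'I_B.+1}) \sum_(c : {ffun 'I_p -> 'I_B.+1})
    \sum_(d : {ffun 'I_p -> 'I_B.+1}) \sum_(e : {ffun 'I_p -> 'I_B.+1})
    (if Cd beta a (natv b) (natv c) && Cd beta (natv c) (natv d) (natv e)
     then t a (natv b) (natv c) * t (natv c) (natv d) (natv e) * G (natv b) (natv d) (natv e) else 0)).
    apply: eq_bigr => b _; apply: eq_bigr => c _; case: ifP => H.
      rewrite (dsumV _ hb (proj2 (hcd _ _ H))).
      by apply: eq_bigr => d _; apply: eq_bigr => e _.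
    by apply/esym/big1 => d _; apply/big1 => e _.
  apply: eq_bigr => b _; rewrite exchange_big; apply: eq_bigr => d _.
  rewrite exchange_big; apply: eq_bigr => e _.
  under eq_bigr do rewrite condL //.
  case: ifP => HQ; last by rewrite big1 // => c _; rewrite HQ.
  rewrite /S mulr_suml; apply: eq_bigr => c _; rewrite /=.
  by case: ifP => _; rewrite ?mul0r.
transitivity (\sum_(W : {ffun 'I_p -> 'I_B.+1}) \sum_(X : {ffun 'I_p -> 'I_B.+1})
  \sum_(Y : {ffun 'I_p -> 'I_B.+1})
  (if Qc beta a (natv X) (natv Y) (natv W) then S' (natv X) (natv Y) (natv W) * G (natv X) (natv Y) (natv W) else 0)).
  under eq_bigr do rewrite exchange_big.
  rewrite exchange_big; apply: eq_bigr => W _; apply: eq_bigr => X _; apply: eq_bigr => Y _.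
  by case: ifP => // HQ; rewrite key.
apply/esym.
transitivity (\sum_(b : {ffun 'I_p -> 'I_B.+1}) \sum_(c : {ffun 'I_p -> 'I_B.+1})
    \sum_(d : {ffun 'I_p -> 'I_B.+1}) \sum_(e : {ffun 'I_p -> 'I_B.+1})
    (if Cd beta a (natv b) (natv c) && Cd beta (natv b) (natv d) (natv e)
     then t a (natv b) (natv c) * t (natv b) (natv d) (natv e) * G (natv d) (natv e) (natv c) else 0)).
  apply: eq_bigr => b _; apply: eq_bigr => c _; case: ifP => H.
    rewrite (dsumV _ hb (proj1 (hcd _ _ H))).
    by apply: eq_bigr => d _; apply: eq_bigr => e _.
  by apply/esym/big1 => d _; apply/big1 => e _.
rewrite exchange_big; apply: eq_bigr => c _; rewrite exchange_big; apply: eq_bigr => d _.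
rewrite exchange_big; apply: eq_bigr => e _.
under eq_bigr do rewrite condR //.
case: ifP => HQ; last by rewrite big1 // => b _.
rewrite /S' mulr_suml; apply: eq_bigr => b _ /=.
by case: ifP => _; rewrite ?mul0r.
Qed.

Lemma eq_dsum (V : nmodType) (theta p : nat) (beta : 'I_p -> {ffun 'I_theta -> nat})
  (a : nvec p) (F F' : nvec p -> nvec p -> V) :
  (forall b c, Cd beta a b c -> F b c = F' b c) -> dsum beta a F = dsum beta a F'.
Proof. by move=> E; apply: eq_bigr => b _; apply: eq_bigr => c Hc; apply: E. Qed.

Lemma dsum0 (V : nmodType) (theta p : nat) (beta : 'I_p -> {ffun 'I_theta -> nat})
  (a : nvec p) (F : nvec p -> nvec p -> V) :
  (forall b c, F b c = 0) -> dsum beta a F = 0.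
Proof. by move=> E; apply: big1 => b _; apply: big1 => c _; apply: E. Qed.

Lemma dsumD (V : nmodType) (theta p : nat) (beta : 'I_p -> {ffun 'I_theta -> nat})
  (a : nvec p) (F F' : nvec p -> nvec p -> V) :
  dsum beta a (fun b c => F b c + F' b c) = dsum beta a F + dsum beta a F'.
Proof. by rewrite /dsum -big_split; apply: eq_bigr => b _; rewrite -big_split. Qed.

Lemma dsumB (V : zmodType) (theta p : nat) (beta : 'I_p -> {ffun 'I_theta -> nat})
  (a : nvec p) (F F' : nvec p -> nvec p -> V) :
  dsum beta a (fun b c => F b c - F' b c) = dsum beta a F - dsum beta a F'.
Proof. by rewrite /dsum -sumrB; apply: eq_bigr => b _; rewrite -sumrB. Qed.

Lemma dsumZ (R : nzRingType) (theta p : nat) (beta : 'I_p -> {ffun 'I_theta -> nat})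
  (a : nvec p) (m : R) (F : nvec p -> nvec p -> R) :
  dsum beta a (fun b c => m * F b c) = m * dsum beta a F.
Proof. by rewrite /dsum mulr_sumr; apply: eq_bigr => b _; rewrite mulr_sumr. Qed.

Lemma dsumZr (R : nzRingType) (theta p : nat) (beta : 'I_p -> {ffun 'I_theta -> nat})
  (a : nvec p) (m : R) (F : nvec p -> nvec p -> R) :
  dsum beta a (fun b c => F b c * m) = dsum beta a F * m.
Proof. by rewrite /dsum mulr_suml; apply: eq_bigr => b _; rewrite mulr_suml. Qed.

Lemma dsum_eval (V : nmodType) (T : finType) (theta p : nat) (beta : 'I_p -> {ffun 'I_theta -> nat})
  (a : nvec p) (F : nvec p -> nvec p -> {ffun T -> V}) (z : T) :
  dsum beta a F z = dsum beta a (fun b c => F b c z).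
Proof. by rewrite /dsum sum_ffunE; apply: eq_bigr => b _; rewrite sum_ffunE. Qed.

Lemma gmul_gelem (k : nzRingType) (gT : finGroupType) (u : galg k gT) (h x : gT) :
  gmul u (gelem k h) x = u (x * h^-1)%g.
Proof.
rewrite ffunE (bigD1 (x * h^-1)%g) //= big1 ?addr0.
  by rewrite ffunE invMg invgK mulgKV eqxx mulr1.
move=> y Hy; rewrite ffunE; case: eqP => E; last by rewrite mulr0.
by rewrite -E invMg invgK mulKVg eqxx in Hy.
Qed.

Lemma skew_basic (k : comNzRingType) (gT : finGroupType) (h x y : gT) (m : k) :
  (if x == y then m * ((x == 1%g)%:R - (x == h)%:R) else 0)
  = (x == h)%:R * (m * ((y == 1%g)%:R - (y == h)%:R)) + m * ((x == 1%g)%:R - (x == h)%:R) * (y == 1%g)%:R.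
Proof.
case: (eqVneq x y) => [<- | nxy].
  by case: (x == 1%g); case: (x == h); rewrite /=; ring.
case: (eqVneq y 1%g) => [ey | ny1].
  subst y; rewrite (negbTE nxy); case: (eqVneq x h) => [exh | nxh].
    subst h; rewrite [1%g == _]eq_sym (negbTE nxy) /=; ring.
  rewrite /=; ring.
case: (eqVneq x h) => [exh | nxh].
  subst h; rewrite [y == _]eq_sym (negbTE nxy) /=; ring.
rewrite /=; ring.
Qed.

Lemma skew_solve (k : comNzRingType) (gT : finGroupType) (h : gT) (v : galg k gT) :
  (forall x y, (if x == y then v x else 0) = (x == h)%:R * v y + v x * (y == 1%g)%:R) ->
  forall z, v z = v 1%g * ((z == 1%g)%:R - (z == h)%:R).
Proof.
move=> Hv z.
case: (eqVneq h 1%g) => [eh | nh1].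
  subst h; have := Hv 1%g z; rewrite eqxx /=.
  case: (eqVneq z 1%g) => [ez | nz1].
    subst z; rewrite /= mul1r mulr1 => E.
    have E0 : v 1%g = 0 by apply: (addrI (v 1%g)); rewrite addr0 -E.
    rewrite E0; ring.
  by rewrite /= mul1r mulr0 addr0 => <-; ring.
have := Hv h z; rewrite eqxx.
case: (eqVneq z h) => [ez | nzh].
  subst z; rewrite (negbTE nh1) /= => _.
  have := Hv h 1%g; rewrite (negbTE nh1) !eqxx /= mul1r mulr1 => /eqP.
  by rewrite eq_sym addr_eq0 => /eqP ->; ring.
rewrite /= mul1r subr0 => E.
case: (eqVneq z 1%g) => [ez | nz1]; first by rewrite ez /= mulr1.
by move: E; rewrite /= (negbTE nz1) mulr0 addr0 => <-; rewrite mulr0.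
Qed.

Unset Implicit Arguments.

Theorem lemma2p9 (k : closedFieldType) (gT : finGroupType)
  (theta p : nat) (g : 'I_theta -> gT) (beta : 'I_p -> {ffun 'I_theta -> nat})
  (N : nat) (t : nvec p -> nvec p -> nvec p -> k)
  (n : nat) (mu : nvec p -> k) (u : nvec p -> galg k gT)
  (a : nvec p) (ua : galg k gT) :
  [pchar k] =i pred0 ->
  abelian [set: gT] ->
  (0 < N)%N ->
  (forall l, 0 < ht (beta l))%N ->
  t_coassoc beta t ->
  (1 <= n)%N ->
  (forall b : nvec p, nzv b -> (ht (under beta b) < n)%N ->
     u b = gscal (mu b) (gelem k 1%g - gelem k (hpow g beta N b))
           + dsum beta b (fun d e => gscal (t b d e * mu d) (u e))) ->
  (forall b : nvec p, nzv b -> (ht (under beta b) < n)%N ->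
     gDelta (u b) = gtens (gelem k (hpow g beta N b)) (u b) + gtens (u b) (gelem k 1%g)
           + dsum beta b (fun d e =>
               gscal2 (t b d e) (gtens (gmul (u d) (gelem k (hpow g beta N e))) (u e)))) ->
  ht (under beta a) = n ->
  (exists mua : k,
     ua = gscal mua (gelem k 1%g - gelem k (hpow g beta N a))
          + dsum beta a (fun b c => gscal (t a b c * mu b) (u c)))
  <->
  gDelta ua = gtens (gelem k (hpow g beta N a)) ua + gtens ua (gelem k 1%g)
              + dsum beta a (fun b c =>
                  gscal2 (t a b c) (gtens (gmul (u b) (gelem k (hpow g beta N c))) (u c))).
Proof.
move=> hchar hab hN hb tc hn hu hD hta.
have C := comm_of_ab hab.
have Hm : forall b c : nvec p, Cd beta a b c ->
    (hpow g beta N b * hpow g beta N c)%g = hpow g beta N a.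
  by move=> b c /and3P [_ _ S]; apply: hpow_mul C S.
have Hlt : forall b c, Cd beta a b c ->
    [/\ (ht (under beta b) < n)%N, (ht (under beta c) < n)%N, nzv b & nzv c].
  move=> b c Hc; have := Hc; case/and3P => nb nc /ht_sumeq E.
  have := nb; rewrite (nz_ht b hb) => hb0; have := nc; rewrite (nz_ht c hb) => hc0.
  rewrite -hta E; split => //.
    by rewrite -{1}(addn0 (ht (under beta b))) ltn_add2l.
  by rewrite -{1}(add0n (ht (under beta c))) ltn_add2r.
have hup : forall b, nzv b -> (ht (under beta b) < n)%N -> forall z,
    u b z = mu b * ((z == 1%g)%:R - (z == hpow g beta N b)%:R)
            + dsum beta b (fun d e => t b d e * mu d * u e z).
  move=> b nb hbn z; rewrite {1}(hu b nb hbn) !ffunE dsum_eval; congr (_ + _).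
  by apply: eq_dsum => d e _; rewrite ffunE.
have hDp : forall b, nzv b -> (ht (under beta b) < n)%N -> forall x y,
    (if x == y then u b x else 0)
    = (x == hpow g beta N b)%:R * u b y + u b x * (y == 1%g)%:R
      + dsum beta b (fun d e => t b d e * (u d (x * (hpow g beta N e)^-1)%g * u e y)).
  move=> b nb hbn x y; move/ffunP/(_ (x, y)): (hD b nb hbn).
  rewrite /= !ffunE /= dsum_eval => ->; congr (_ + _).
  by apply: eq_dsum => d e _; rewrite -(gmul_gelem (u d) (hpow g beta N e) x) !ffunE.
pose W' z := dsum beta a (fun b c => t a b c * mu b * u c z).
have hW : forall z, dsum beta a (fun b c => gscal (t a b c * mu b) (u c)) z = W' z.
  by move=> z; rewrite dsum_eval; apply: eq_dsum => b c _; rewrite ffunE.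
pose S' x y := dsum beta a (fun b c => t a b c * (u b (x * (hpow g beta N c)^-1)%g * u c y)).
have hS : forall x y, dsum beta a (fun b c =>
                  gscal2 (t a b c) (gtens (gmul (u b) (gelem k (hpow g beta N c))) (u c))) (x, y)
          = S' x y.
  by move=> x y; rewrite dsum_eval; apply: eq_dsum => b c _; rewrite -(gmul_gelem (u b) (hpow g beta N c) x) !ffunE.
have K : forall x y, (if x == y then W' x else 0)
    = (x == hpow g beta N a)%:R * W' y + W' x * (y == 1%g)%:R + S' x y.
  move=> x y.
  pose G (X Y Z : nvec p) := mu X * (u Y (x * (hpow g beta N Z)^-1)%g * u Z y).
  have CB := comb G a hb tc.
  transitivity (dsum beta a (fun b c =>
      (x == hpow g beta N a)%:R * (t a b c * mu b * u c y)
      + t a b c * mu b * u c x * (y == 1%g)%:R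
      + t a b c * (u b (x * (hpow g beta N c)^-1)%g * u c y)
      + (dsum beta c (fun d e => t a b c * t c d e * G b d e)
         - dsum beta b (fun d e => t a b c * t b d e * G d e c)))).
    have -> : (if x == y then W' x else 0)
        = dsum beta a (fun b c => t a b c * mu b * (if x == y then u c x else 0)).
      case: (x == y); first by apply: eq_dsum.
      by rewrite dsum0 // => b c; rewrite mulr0.
    apply: eq_dsum => b c Hc.
    have [hbn hcn nb nc] := Hlt b c Hc.
    rewrite (hDp c nc hcn x y) (hup b nb hbn (x * (hpow g beta N c)^-1)%g).
    rewrite -(Hm b c Hc).
    have e1 : (x * (hpow g beta N c)^-1 == 1)%g = (x == hpow g beta N c).
      apply/eqP/eqP => [E|->]; last by rewrite mulgV.
      by rewrite -(mulgKV (hpow g beta N c) x) E mul1g.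
    have e2 : (x * (hpow g beta N c)^-1 == hpow g beta N b)%g
        = (x == hpow g beta N b * hpow g beta N c)%g.
      by apply/eqP/eqP => [<-|->]; [rewrite mulgKV | rewrite mulgK].
    rewrite e1 e2.
    have r1 : dsum beta c (fun d e => t a b c * t c d e * G b d e)
        = t a b c * mu b * dsum beta c (fun d e => t c d e * (u d (x * (hpow g beta N e)^-1)%g * u e y)).
      by rewrite -dsumZ; apply: eq_dsum => d e _; rewrite /G; ring.
    have r2 : dsum beta b (fun d e => t a b c * t b d e * G d e c)
        = t a b c * u c y * dsum beta b (fun d e => t b d e * mu d * u e (x * (hpow g beta N c)^-1)%g).
      by rewrite -dsumZ; apply: eq_dsum => d e _; rewrite /G; ring.
    rewrite r1 r2; ring.
  by rewrite dsumD dsumB CB subrr addr0 !dsumD dsumZ dsumZr.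
split.
  case=> m ->; apply/ffunP => -[x y]; rewrite !ffunE /= !hW hS.
  have -> : (if x == y then m * ((x == 1%g)%:R - (x == hpow g beta N a)%:R) + W' x else 0)
      = (if x == y then m * ((x == 1%g)%:R - (x == hpow g beta N a)%:R) else 0)
        + (if x == y then W' x else 0) by case: (x == y); rewrite ?addr0.
  rewrite skew_basic K; ring.
move=> E.
pose v := [ffun z => ua z - W' z].
have Hv : forall x y, (if x == y then v x else 0)
    = (x == hpow g beta N a)%:R * v y + v x * (y == 1%g)%:R.
  move=> x y; move/ffunP/(_ (x, y)): E; rewrite !ffunE /= hS => Ex.
  have -> : (if x == y then ua x - W' x else 0)
      = (if x == y then ua x else 0) - (if x == y then W' x else 0)
    by case: (x == y); rewrite ?subr0.
  rewrite Ex K; ring.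
exists (v 1%g); apply/ffunP => z.
have := skew_solve Hv z; rewrite !ffunE hW => Ez.
by rewrite -Ez; ring.
Qed.
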